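(* There is a neighborhood $U_0$ of $(0,0)\in\mathbb{R}^k\times\mathbb{R}^{n-k}$ and a neighborhood $U_1$ of $p_0\in\mathcal{O}$ such that $$G:U_0\longrightarrow U_1$$ is a Lipschitz homeomorphism, with Lipschitz inverse.
   Context: Let $\Omega$ be a manifold of dimension $n$ and $\mathcal{E}\subset T\Omega$ a Lipschitz subbundle of fiber dimension $k<n$ which is involutive (brackets of Lipschitz sections are $L^\infty$ sections of $\mathcal{E}$). Fix $p_0\in\Omega$ and coordinates $x\in\mathbb{R}^n$ centered at $p_0=0$ on a neighborhood $\mathcal{O}$, in which $\mathcal{E}$ is spanned by Lipschitz vector fields of the form $$Y_i=\partial_i+\sum_{\ell\ge k+1} D_{i\ell}(x)\,\partial_\ell,\quad 1\le i\le k,$$ with $D_{i\ell}$ Lipschitz and $D_{i\ell}(0)=0$, and satisfying $[Y_i,Y_j]=0$ for $1\le i,j\le k$. For such commuting Lipschitz vector fields the local flows $\mathcal{F}^{t_j}_{Y_j}$ commute, and $y(t,x)=\mathcal{F}^{t_1}_{Y_1}\circ\cdots\circ\mathcal{F}^{t_k}_{Y_k}(x)$ is the unique solution of $\partial y/\partial t_j=Y_j(y)$, $y(0,x)=x$, defined for $|t_j|<\delta$ and $x$ in a compact subset, and is Lipschitz in $(t,x)$. Write $\mathcal{F}^t=\mathcal{F}^{t_1}_{Y_1}\circ\cdots\circ\mathcal{F}^{t_k}_{Y_k}$ and, for $z$ close to $0$ in $\mathbb{R}^{n-k}$ and $|t|<\delta$, define $$G(t,z)=y(t,0,z)=\mathcal{F}^t(0,z).$$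 *)

(* Defs.v *)
From HB Require Import structures.
From mathcomp Require Import all_boot all_order all_algebra.
From mathcomp Require Import all_classical all_reals all_analysis.
Set Implicit Arguments. Unset Strict Implicit. Unset Printing Implicit Defensive.
Import Order.TTheory GRing.Theory Num.Theory.
Import numFieldNormedType.Exports.
Local Open Scope classical_set_scope.
Local Open Scope ring_scope.

(* Coordinates on R^n with n = k + m (m = n - k >= 1).  A point is a row
   vector 'rV_(k+m); its first k coordinates are x_1..x_k, the last m are
   x_{k+1}..x_n.  The vector field
     Y_i = \partial_i + \sum_{l >= k+1} D_{il}(x) \partial_l
   is represented by its coefficient vector; D i l is D_{i,k+1+l}. *)
Definition Yfield (R : realType) (k m : nat)
  (D : 'I_k -> 'I_m -> 'rV[R]_(k + m) -> R) (i : 'I_k) (p : 'rV[R]_(k + m))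
  : 'rV[R]_(k + m) :=
  row_mx (delta_mx 0 i) (\row_(l < m) D i l p).

Definition Gmap (R : realType) (k m : nat)
  (y : 'rV[R]_k -> 'rV[R]_(k + m) -> 'rV[R]_(k + m))
  (p : 'rV[R]_k * 'rV[R]_m) : 'rV[R]_(k + m) :=
  y p.1 (row_mx 0 p.2).

(* Main.v *)
Require Import Defs.
From HB Require Import structures.
From mathcomp Require Import all_boot all_order all_algebra.
From mathcomp Require Import all_classical all_reals all_analysis.
From mathcomp Require Import ring lra.
Import Order.TTheory GRing.Theory Num.Theory.
Import numFieldNormedType.Exports.
Local Open Scope classical_set_scope.
Local Open Scope ring_scope.
Lemma rv_norm_le (R : realType) n (v : 'rV[R]_n) (C : R) :
  0 <= C -> (forall i, `|v 0 i| <= C) -> `|v| <= C.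
Proof.
move=> C0 H; rewrite [`|v|]/Num.Def.normr /= mx_normrE; apply/bigmax_leP; split => //.
by move=> [a b] _ /=; rewrite (ord1 a); exact: H.
Qed.

Lemma rv_coord_le (R : realType) n (v : 'rV[R]_n) i : `|v 0 i| <= `|v|.
Proof.
rewrite [`|v|]/Num.Def.normr /= mx_normrE; apply/bigmax_geP; right => /=.
by exists (0, i).
Qed.

Lemma lsub_norm (R : realType) k m (v : 'rV[R]_(k + m)) : `|lsubmx v| <= `|v|.
Proof. by apply: rv_norm_le => // i; rewrite mxE; exact: rv_coord_le. Qed.

Lemma rsub_norm (R : realType) k m (v : 'rV[R]_(k + m)) : `|rsubmx v| <= `|v|.
Proof. by apply: rv_norm_le => // i; rewrite mxE; exact: rv_coord_le. Qed.

Lemma row0_norm (R : realType) k m (z : 'rV[R]_m) : `|row_mx (0 : 'rV[R]_k) z| = `|z|.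
Proof.
apply/eqP; rewrite eq_le; apply/andP; split.
  apply: rv_norm_le => // i; case: (splitP i) => j ij.
    have -> : i = lshift m j by exact: val_inj.
    by rewrite row_mxEl mxE normr0.
  have -> : i = rshift k j by exact: val_inj.
  by rewrite row_mxEr; exact: rv_coord_le.
apply: rv_norm_le => // i; rewrite -(row_mxEr (0 : 'rV[R]_k)); exact: rv_coord_le.
Qed.

Lemma derive_coord (R : realType) n (F : R -> 'rV[R]_n) s c :
  derivable F s 1 ->
  derivable (fun x => F x 0 c) s 1 /\ 'D_1 (fun x => F x 0 c) s = ('D_1 F s) 0 c.
Proof.
move=> dF.
have E : (fun h : R => h^-1 *: (((fun x => F x 0 c) \o shift s) (h *: 1) - F s 0 c))
   = (fun M : 'rV[R]_n => M 0 c) \o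
     (fun h : R => h^-1 *: ((F \o shift s) (h *: 1) - F s)).
  by apply/funext => h /=; rewrite !mxE.
have cv : (fun h : R => h^-1 *: (((fun x => F x 0 c) \o shift s) (h *: 1) - F s 0 c))
   @ 0^' --> ('D_1 F s) 0 c.
  rewrite E; apply: continuous_cvg; first exact: coord_continuous.
  exact: dF.
split; first by apply/cvg_ex; eexists; exact: cv.
by rewrite /derive; apply: cvg_lim.
Qed.

Lemma dir_derive (R : realType) k (W : normedModType R) (f : 'rV[R]_k -> W) a e s :
  derivable f (a + s *: e) e ->
  derivable (fun u : R => f (a + u *: e)) s 1 /\
  'D_1 (fun u : R => f (a + u *: e)) s = 'D_e f (a + s *: e).
Proof.
have E : (fun h : R => h^-1 *: (((fun u : R => f (a + u *: e)) \o shift s) (h *: 1)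
             - f (a + s *: e)))
  = (fun h : R => h^-1 *: ((f \o shift (a + s *: e)) (h *: e) - f (a + s *: e))).
  apply/funext => h /=; congr (_ *: (f _ - _)).
  by rewrite /shift /= -[h%:A]/(h * 1) mulr1 scalerDl addrCA addrC.
by rewrite /derivable /derive E.
Qed.

Lemma mvt_comp0 (R : realType) n (F : R -> 'rV[R]_n) c (v C a b : R) :
  a <= b ->
  (forall s, a <= s <= b -> derivable F s 1 /\ `|('D_1 F s) 0 c - v| <= C) ->
  `|F b 0 c - F a 0 c - v * (b - a)| <= C * `|b - a|.
Proof.
move=> ab H.
pose f := fun x : R => F x 0 c - x * v.
have df s : a <= s <= b -> derivable f s 1 /\ 'D_1 f s = ('D_1 F s) 0 c - v.
  move=> /H [dF _]; have [d1 d2] := @derive_coord _ _ _ _ c dF.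
  have dm : derivable (fun x : R => x * v) s 1.
    by apply/derivable1_diffP; apply: differentiableM.
  split; first by apply: derivableB.
  rewrite /f deriveB // d2; congr (_ - _).
  by rewrite -derive1E (derive1Mr (f := id)) ?derive1_id ?mul1r //; exact: derivable_id.
have [c' c'ab E] : exists2 c', c' \in `[a, b] & f b - f a = (('D_1 F c') 0 c - v) * (b - a).
  apply: MVT_segment => //.
    move=> x; rewrite in_itv /= => /andP[ax xb].
    have [d1 d2] := df x ltac:(by rewrite !ltW).
    by split => //.
  apply: continuous_in_subspaceT => x; rewrite inE /= in_itv /= => xab.
  apply: differentiable_continuous; apply/derivable1_diffP; exact: (df x xab).1.
have -> : F b 0 c - F a 0 c - v * (b - a) = f b - f a by rewrite /f mulrBr; ring.
rewrite E normrM (ger0_norm (x := b - a)) ?subr_ge0 // ler_wpM2r ?subr_ge0 //.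
by move: c'ab; rewrite in_itv /= => /H [].
Qed.

Lemma mvt_comp (R : realType) n (F : R -> 'rV[R]_n) c (v C a b : R) :
  (forall s, Num.min a b <= s <= Num.max a b ->
     derivable F s 1 /\ `|('D_1 F s) 0 c - v| <= C) ->
  `|F b 0 c - F a 0 c - v * (b - a)| <= C * `|b - a|.
Proof.
move=> H; have [ab|ba] := leP a b.
  apply: mvt_comp0 => // s sab; apply: H.
  by rewrite (min_l ab) (max_r ab).
have ba' := ltW ba.
rewrite -normrN distrC.
have -> : - (F b 0 c - F a 0 c - v * (b - a)) = F a 0 c - F b 0 c - v * (a - b).
  by ring.
apply: mvt_comp0 => // s sab; apply: H.
by rewrite (min_r ba') (max_l ba').
Qed.

Lemma lip_within (R : realType) (V W : normedModType R) (A : set V) (f : V -> W) (L : R) :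
  0 <= L -> (forall x y, A x -> A y -> `|f x - f y| <= L * `|x - y|) ->
  {within A, continuous f}.
Proof.
move=> L0 H; apply/subspace_continuousP => x Ax.
apply/cvgrPdist_lt => e e0.
have L1 : 0 < L + 1 by rewrite ltr_wpDl.
rewrite near_withinE; near=> t => At.
rewrite (le_lt_trans (H _ _ Ax At)) //.
have : `|x - t| < e / (L + 1).
  near: t; apply: cvgr_dist_lt => //.
  by rewrite divr_gt0.
rewrite ltr_pdivlMr // => xt.
apply: (le_lt_trans _ xt).
by rewrite mulrC ler_wpM2l ?normr_ge0 // lerDl.
Unshelve. all: by end_near. Qed.

Lemma lip_get (R : realType) (V W : normedModType R) (A : set V) (f : V -> W) :
  [lipschitz f x | x in A] ->
  exists2 L, 0 <= L & forall x y, A x -> A y -> `|f x - f y| <= L * `|x - y|.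
Proof.
move=> /pinfty_ex_gt0 [L L0 HL]; exists L; first exact: ltW.
by move=> x y Ax Ay; exact: (HL (x, y)).
Qed.

Lemma lip_getF (R : realType) (I : finType) (V W : normedModType R) (A : set V)
  (f : I -> V -> W) :
  (forall i, [lipschitz f i x | x in A]) ->
  exists2 L, 0 <= L & forall i x y, A x -> A y -> `|f i x - f i y| <= L * `|x - y|.
Proof.
move=> H.
have H' := filter_forall _ H.
have [L L0 HL] := pinfty_ex_gt0 (H' _).
exists L; first exact: ltW.
by move=> i x y Ax Ay; exact: (HL i (x, y)).
Qed.

Lemma lip_mk (R : realType) (V W : normedModType R) (A : set V) (f : V -> W) (L : R) :
  (forall x y, A x -> A y -> `|f x - f y| <= L * `|x - y|) ->
  [lipschitz f x | x in A].
Proof.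
move=> H.
have Lr : L \is Num.real by rewrite num_real.
rewrite /lipschitz_on; near=> M => -[x y] [/= Ax Ay].
apply: le_trans (H _ _ Ax Ay) _; rewrite ler_wpM2r //.
Unshelve. all: by end_near. Qed.

Definition Tpath (R : realType) k (t : 'rV[R]_k) (j : nat) : 'rV[R]_k :=
  \row_i (if (i < j)%N then t 0 i else 0).
Arguments Tpath {R k}.

Lemma Tpath0 (R : realType) k (t : 'rV[R]_k) : Tpath t 0 = 0.
Proof. by apply/rowP => i; rewrite !mxE. Qed.

Lemma TpathK (R : realType) k (t : 'rV[R]_k) : Tpath t k = t.
Proof. by apply/rowP => i; rewrite !mxE ltn_ord. Qed.

Lemma TpathS (R : realType) k (t : 'rV[R]_k) j (jk : (j < k)%N) :
  Tpath t j.+1 = Tpath t j + t 0 (Ordinal jk) *: delta_mx 0 (Ordinal jk).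
Proof.
apply/rowP => i; rewrite !mxE eqxx /= ltnS leq_eqVlt.
have [ij|ij] := eqVneq (nat_of_ord i) j.
  have -> : i = Ordinal jk by exact: val_inj.
  by rewrite eqxx ltnn add0r mulr1.
have -> : (i == Ordinal jk) = false by apply/eqP => /(congr1 val) /= /eqP; rewrite (negbTE ij).
by rewrite mulr0 addr0 /=.
Qed.

Arguments TpathS {R k} t {j} jk.

Lemma between0 (R : realType) (b s : R) :
  Num.min 0 b <= s <= Num.max 0 b -> `|s| <= `|b|.
Proof.
have [b0|b0] := leP 0 b.
  move=> /andP[s0 sb].
  by rewrite !ger0_norm // (le_trans s0 sb).
move=> /andP[bs s0].
by rewrite !ler0_norm // ?lerN2 // (le_trans bs s0).
Qed.

Lemma Tpath_box (R : realType) k (t : 'rV[R]_k) j (jk : (j < k)%N) s :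
  `|s| <= `|t 0 (Ordinal jk)| ->
  `|Tpath t j + s *: delta_mx 0 (Ordinal jk)| <= `|t|.
Proof.
move=> st; apply: rv_norm_le => // i; rewrite !mxE eqxx /=.
have [ij|ij] := eqVneq i (Ordinal jk).
  by rewrite ij /= ltnn add0r mulr1 (le_trans st) // rv_coord_le.
rewrite mulr0 addr0; case: ifP => _; last by rewrite normr0.
exact: rv_coord_le.
Qed.

Arguments Tpath_box {R k t j jk s}.

Lemma first_block (R : realType) (k m : nat)
  (D : 'I_k -> 'I_m -> 'rV[R]_(k + m) -> R)
  (y : 'rV[R]_k -> 'rV[R]_(k + m) -> 'rV[R]_(k + m)) (delta r : R) :
  (forall x, `|x| <= r -> y 0 x = x) ->
  (forall t x (j : 'I_k), `|t| < delta -> `|x| <= r ->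
     derivable (fun s => y s x) t (delta_mx 0 j) /\
     'D_(delta_mx 0 j) (fun s => y s x) t = Yfield D j (y t x)) ->
  forall t x, `|t| < delta -> `|x| <= r ->
  forall i, y t x 0 (lshift m i) = x 0 (lshift m i) + t 0 i.
Proof.
move=> Hy0 Hder t x tdelta xr.
suff H : forall j, (j <= k)%N -> forall i,
    y (Tpath t j) x 0 (lshift m i) = x 0 (lshift m i) + Tpath t j 0 i.
  by have := H k (leqnn k); rewrite TpathK.
elim => [_ i|j IH jk i]; first by rewrite Tpath0 Hy0 // mxE addr0.
set jo := Ordinal jk.
pose F := fun s : R => y (Tpath t j + s *: delta_mx 0 jo) x.
have Hs : forall s, Num.min 0 (t 0 jo) <= s <= Num.max 0 (t 0 jo) ->
    derivable F s 1 /\ `|('D_1 F s) 0 (lshift m i) - (i == jo)%:R| <= 0.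
  move=> s /between0 sb.
  have sbox : `|Tpath t j + s *: delta_mx 0 jo| < delta.
    exact: (le_lt_trans (Tpath_box sb)).
  have [d1 d2] := Hder _ x jo sbox xr.
  have [e1 e2] := @dir_derive R k _ (fun s => y s x) (Tpath t j) (delta_mx 0 jo) s d1.
  split; first exact: e1.
  rewrite e2 d2 /Yfield row_mxEl !mxE eqxx /= subrr normr0 //.
have := @mvt_comp R _ F (lshift m i) (i == jo)%:R 0 0 (t 0 jo) Hs.
rewrite mul0r normr_le0 subr_eq0 subr0 => /eqP HF.
have F0 : F 0 = y (Tpath t j) x by rewrite /F scale0r addr0.
have F1 : y (Tpath t j.+1) x = F (t 0 jo).
  Time rewrite (TpathS t jk). Time reflexivity.
have T1 : Tpath t j.+1 0 i = Tpath t j 0 i + (i == jo)%:R * t 0 jo.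
  Time rewrite (TpathS t jk) !mxE eqxx /=. Time by rewrite mulrC.
rewrite F1 T1.
have E := IH (ltnW jk) i; rewrite -F0 in E.
have -> : F (t 0 jo) 0 (lshift m i) = (i == jo)%:R * t 0 jo + F 0 0 (lshift m i).
  by rewrite -HF subrK.
by rewrite E addrC -addrA.
Qed.

Lemma second_block (R : realType) (k m : nat) (O : set 'rV[R]_(k + m))
  (D : 'I_k -> 'I_m -> 'rV[R]_(k + m) -> R)
  (y : 'rV[R]_k -> 'rV[R]_(k + m) -> 'rV[R]_(k + m)) (delta r Ld Ly : R) :
  0 <= Ld -> 0 <= Ly ->
  (forall i l p q, O p -> O q -> `|D i l p - D i l q| <= Ld * `|p - q|) ->
  (forall t x, `|t| < delta -> `|x| <= r -> O (y t x)) ->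
  (forall t a b, `|t| < delta -> `|a| <= r -> `|b| <= r ->
     `|y t a - y t b| <= Ly * `|a - b|) ->
  (forall x, `|x| <= r -> y 0 x = x) ->
  (forall t x (j : 'I_k), `|t| < delta -> `|x| <= r ->
     derivable (fun s => y s x) t (delta_mx 0 j) /\
     'D_(delta_mx 0 j) (fun s => y s x) t = Yfield D j (y t x)) ->
  forall t a b, `|t| < delta -> `|a| <= r -> `|b| <= r -> forall l,
  `|(y t a - y t b - (a - b)) 0 (rshift k l)| <= k%:R * `|t| * (Ld * (Ly * `|a - b|)).
Proof.
move=> Ld0 Ly0 HD HO Hly Hy0 Hder t a b tdelta ar br l.
set C0 := Ld * (Ly * `|a - b|).
suff H : forall j, (j <= k)%N ->
    `|(y (Tpath t j) a - y (Tpath t j) b - (a - b)) 0 (rshift k l)| <= j%:R * `|t| * C0.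
  by have := H k (leqnn k); rewrite TpathK.
elim => [_|j IH jk].
  by rewrite Tpath0 !Hy0 // subrr mxE normr0 mul0r mul0r.
set jo := Ordinal jk.
pose Fa := fun s : R => y (Tpath t j + s *: delta_mx 0 jo) a.
pose Fb := fun s : R => y (Tpath t j + s *: delta_mx 0 jo) b.
pose F := Fa - Fb.
have Hs : forall s, Num.min 0 (t 0 jo) <= s <= Num.max 0 (t 0 jo) ->
    derivable F s 1 /\ `|('D_1 F s) 0 (rshift k l) - 0| <= C0.
  move=> s /between0 sb.
  have sbox : `|Tpath t j + s *: delta_mx 0 jo| < delta.
    exact: (le_lt_trans (Tpath_box sb)).
  have [da1 da2] := Hder _ a jo sbox ar.
  have [db1 db2] := Hder _ b jo sbox br.
  have [ea1 ea2] := @dir_derive R k _ (fun s => y s a) (Tpath t j) (delta_mx 0 jo) s da1.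
  have [eb1 eb2] := @dir_derive R k _ (fun s => y s b) (Tpath t j) (delta_mx 0 jo) s db1.
  split; first exact: (derivableB ea1 eb1).
  have EY : forall p, (Yfield D jo p) 0 (rshift k l) = D jo l p.
    by move=> p; rewrite /Yfield row_mxEr mxE.
  have EY2 : forall p q, (Yfield D jo p - Yfield D jo q) 0 (rshift k l) = D jo l p - D jo l q.
    by move=> p q; rewrite -!EY !mxE.
  rewrite subr0 /F (deriveB ea1 eb1) ea2 eb2 da2 db2 EY2.
  apply: (le_trans (HD jo l _ _ (HO _ _ sbox ar) (HO _ _ sbox br))).
  by rewrite ler_wpM2l // Hly.
have := @mvt_comp R _ F (rshift k l) 0 C0 0 (t 0 jo) Hs.
rewrite mul0r subr0 !subr0 => HF.
have F0 : F 0 = y (Tpath t j) a - y (Tpath t j) b.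
  by rewrite -[F 0]/(Fa 0 - Fb 0) /Fa /Fb scale0r !addr0.
have F1 : y (Tpath t j.+1) a - y (Tpath t j.+1) b = F (t 0 jo) by rewrite (TpathS t jk).
rewrite F1.
have -> : (F (t 0 jo) - (a - b)) 0 (rshift k l) =
   (F (t 0 jo) 0 (rshift k l) - F 0 0 (rshift k l)) + (F 0 - (a - b)) 0 (rshift k l).
  by rewrite !mxE addrA subrK.
apply: le_trans (ler_normD _ _) _.
rewrite -nat1r mulrDl mulrDl mul1r; apply: lerD.
  apply: le_trans HF _; rewrite mulrC ler_wpM2r //.
    by rewrite /C0 mulr_ge0 // mulr_ge0.
  exact: rv_coord_le.
by rewrite F0; apply: IH; exact: ltnW.
Qed.

HB.instance Definition _ (R : realType) (m n : nat) :=
  Uniform_isComplete.Build 'M[R]_(m, n) (@mx_complete R m n).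

Lemma fixpt (R : realType) m (Phi : 'rV[R]_m -> 'rV[R]_m) (rho : R) :
  0 < rho -> (forall z, `|z| <= rho -> `|Phi z| <= rho) ->
  (forall z z', `|z| <= rho -> `|z'| <= rho -> `|Phi z - Phi z'| <= 2^-1 * `|z - z'|) ->
  exists z, `|z| <= rho /\ Phi z = z.
Proof.
move=> rho0 HB Hc.
pose B := [set z : 'rV[R]_m | `|z| <= rho].
have fAB : set_fun B B Phi by move=> z; exact: HB.
pose f := mkfun_fun fAB.
have ctr : is_contraction f.
  exists (2^-1 : R)%:nng; split => /=; first by rewrite invf_lt1 // ltr1n.
  by move=> [z z'] [/= Bz Bz']; exact: Hc.
have clB : closed B.
  rewrite (_ : B = closed_ball (0 : 'rV[R]_m) rho); first exact: closed_ball_closed.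
  by rewrite closed_ballE //; apply/funext => z; rewrite /closed_ball_ /B /= sub0r normrN.
have B0 : B 0 by rewrite /B /mkset normr0 ltW.
have [z Bz zf] := @banach_fixed_point R 'rV[R]_m B f ctr clB (ex_intro _ 0 B0).
by exists z; split.
Qed.

Theorem proposition2p3 (R : realType) (k m : nat)
  (O : set 'rV[R]_(k + m))
  (D : 'I_k -> 'I_m -> 'rV[R]_(k + m) -> R)
  (y : 'rV[R]_k -> 'rV[R]_(k + m) -> 'rV[R]_(k + m))
  (delta r : R) :
  (0 < m)%N ->
  open O -> O 0 ->
  (forall i l, [lipschitz D i l x | x in O]) ->
  (forall i l, D i l 0 = 0) ->
  0 < delta -> 0 < r ->
  (forall t x, `|t| < delta -> `|x| <= r -> O (y t x)) ->
  (forall x, `|x| <= r -> y 0 x = x) ->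
  (forall t x (j : 'I_k), `|t| < delta -> `|x| <= r ->
     derivable (fun s => y s x) t (delta_mx 0 j) /\
     'D_(delta_mx 0 j) (fun s => y s x) t = Yfield D j (y t x)) ->
  [lipschitz y p.1 p.2 | p in [set p : 'rV[R]_k * 'rV[R]_(k + m) |
                                 `|p.1| < delta /\ `|p.2| <= r]] ->
  exists (U0 : set ('rV[R]_k * 'rV[R]_m)) (U1 : set 'rV[R]_(k + m)),
    [/\ nbhs ((0 : 'rV[R]_k), (0 : 'rV[R]_m)) U0,
        nbhs (0 : 'rV[R]_(k + m)) U1,
        (forall p, U0 p -> `|p.1| < delta /\ `|row_mx (0 : 'rV[R]_k) p.2| <= r),
        Gmap y @` U0 = U1 &
        exists Ginv : 'rV[R]_(k + m) -> 'rV[R]_k * 'rV[R]_m,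
          [/\ (forall p, U0 p -> Ginv (Gmap y p) = p),
              (forall q, U1 q -> U0 (Ginv q) /\ Gmap y (Ginv q) = q),
              {within U0, continuous Gmap y} /\
                {within U1, continuous Ginv},
              [lipschitz Gmap y p | p in U0] &
              [lipschitz Ginv q | q in U1]]].
Proof.
move=> m0 Oop O0 HD HD0 delta0 r0 HO Hy0 Hder Hlip.
have [Ld Ld0 HLd] := @lip_getF R ('I_k * 'I_m)%type _ _ O
  (fun il => D il.1 il.2) (fun il => HD il.1 il.2).
have HD' : forall i l p q, O p -> O q -> `|D i l p - D i l q| <= Ld * `|p - q|.
  by move=> i l; exact: (HLd (i, l)).
have [Ly Ly0 HLy] := @lip_get _ _ _ _ _ Hlip.
have Hly : forall t a b, `|t| < delta -> `|a| <= r -> `|b| <= r ->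
    `|y t a - y t b| <= Ly * `|a - b|.
  move=> t a b ta ar br.
  have := HLy (t, a) (t, b) (conj ta ar) (conj ta br).
  have -> : `|(t, a) - (t, b)| = Num.max `|t - t| `|a - b| by [].
  by rewrite subrr normr0 max_r.
have Hfb := @first_block _ _ _ D y delta r Hy0 Hder.
have Hsb := @second_block _ _ _ O D y delta r Ld Ly Ld0 Ly0 HD' HO Hly Hy0 Hder.
set K0 := k%:R * (Ld * Ly).
have K00 : 0 <= K0 by rewrite /K0 !mulr_ge0.
set rho := Num.min (Num.min (delta / 2) r) (2 * (K0 + 1))^-1.
have rho0 : 0 < rho.
  by rewrite /rho !lt_min divr_gt0 //= r0 /= invr_gt0 mulr_gt0 // ltr_wpDl.
have rhod : rho < delta.
  apply: (le_lt_trans (y := delta / 2)); first by rewrite /rho !ge_min lexx.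
  by rewrite ltr_pdivrMr // ltr_pMr // ltr1n.
have rhor : rho <= r by rewrite /rho !ge_min lexx orbT.
have rhoK : K0 * rho * 2 <= 1.
  have h1 : rho <= (2 * (K0 + 1))^-1 by rewrite /rho ge_min lexx orbT.
  have h2 : 0 < 2 * (K0 + 1) by rewrite mulr_gt0 // ltr_wpDl.
  set X := (2 * (K0 + 1))^-1 in h1.
  have hX : X * (2 * (K0 + 1)) = 1 by rewrite mulVf // lt0r_neq0.
  have hXp : 0 < X by rewrite invr_gt0.
  apply: (le_trans (y := K0 * X * 2)).
    by rewrite ler_wpM2r // ler_wpM2l.
  nra.
have LS : forall t (z : 'rV[R]_m), `|t| < delta -> `|z| <= r ->
    lsubmx (y t (row_mx (0 : 'rV[R]_k) z)) = t.
  move=> t z td zr; apply/rowP => i.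
  by rewrite mxE (Hfb _ _ td) ?row0_norm // row_mxEl mxE add0r.
have Hrow : forall z z' : 'rV[R]_m,
    row_mx (0 : 'rV[R]_k) z - row_mx 0 z' = row_mx 0 (z - z').
  by move=> z z'; rewrite opp_row_mx add_row_mx oppr0 addr0.
have HC : forall t (z z' : 'rV[R]_m), `|t| < rho -> `|z| <= rho -> `|z'| <= rho ->
    `|rsubmx (y t (row_mx 0 z) - y t (row_mx 0 z')) - (z - z')| <= K0 * `|t| * `|z - z'|.
  move=> t z z' tr zr z'r.
  have td : `|t| < delta := lt_trans tr rhod.
  have zr' : `|row_mx (0 : 'rV[R]_k) z| <= r by rewrite row0_norm (le_trans zr rhor).
  have z'r' : `|row_mx (0 : 'rV[R]_k) z'| <= r by rewrite row0_norm (le_trans z'r rhor).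
  apply: rv_norm_le; first by rewrite !mulr_ge0.
  move=> l.
  have E : rsubmx (y t (row_mx 0 z) - y t (row_mx 0 z') - row_mx 0 (z - z')) =
      rsubmx (y t (row_mx 0 z) - y t (row_mx 0 z')) - (z - z').
    by rewrite linearB /= row_mxKr.
  rewrite -E.
  rewrite mxE -Hrow; apply: le_trans (Hsb t _ _ td zr' z'r' l) _.
  suff -> : k%:R * `|t| * (Ld * (Ly * `|row_mx (0 : 'rV[R]_k) z - row_mx 0 z'|)) =
     K0 * `|t| * `|z - z'| by [].
  by rewrite Hrow row0_norm /K0; ring.
have Hlyt : forall t t' x, `|t| < delta -> `|t'| < delta -> `|x| <= r ->
    `|y t x - y t' x| <= Ly * `|t - t'|.
  move=> t t' x ta t'a xr.
  have := HLy (t, x) (t', x) (conj ta xr) (conj t'a xr).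
  have -> : `|(t, x) - (t', x)| = Num.max `|t - t'| `|x - x| by [].
  by rewrite subrr normr0 max_l.
have Kt : forall t : 'rV[R]_k, `|t| < rho -> K0 * `|t| * 2 <= 1.
  move=> t tr; apply: le_trans rhoK; rewrite ler_wpM2r // ler_wpM2l //; exact: ltW.
set U0 := [set p : 'rV[R]_k * 'rV[R]_m | `|p.1| < rho /\ `|p.2| <= rho].
have U0S : forall p, U0 p -> `|p.1| < delta /\ `|row_mx (0 : 'rV[R]_k) p.2| <= r.
  move=> [t z] [/= tr zr]; split; first exact: lt_trans tr rhod.
  by rewrite row0_norm (le_trans zr rhor).
have Glip : forall p p', U0 p -> U0 p' -> `|Gmap y p - Gmap y p'| <= Ly * `|p - p'|.
  move=> p p' /U0S [t1 z1] /U0S [t2 z2].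
  have := HLy (p.1, row_mx 0 p.2) (p'.1, row_mx 0 p'.2) (conj t1 z1) (conj t2 z2).
  have -> : `|(p.1, row_mx (0 : 'rV[R]_k) p.2) - (p'.1, row_mx 0 p'.2)| =
     Num.max `|p.1 - p'.1| `|row_mx (0 : 'rV[R]_k) p.2 - row_mx 0 p'.2| by [].
  have -> : `|p - p'| = Num.max `|p.1 - p'.1| `|p.2 - p'.2| by [].
  by rewrite Hrow row0_norm.
have Ginvb : forall p p', U0 p -> U0 p' ->
    `|p - p'| <= 2 * (1 + Ly) * `|Gmap y p - Gmap y p'|.
  move=> [t z] [t' z'] [/= tr zr] [/= t'r z'r].
  rewrite /Gmap /=.
  have td : `|t| < delta := lt_trans tr rhod.
  have t'd : `|t'| < delta := lt_trans t'r rhod.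
  have zr' : `|z| <= r := le_trans zr rhor.
  have z'r' : `|z'| <= r := le_trans z'r rhor.
  have z'r'' : `|row_mx (0 : 'rV[R]_k) z'| <= r by rewrite row0_norm.
  set A := y t (row_mx 0 z). set A' := y t' (row_mx 0 z').
  have Ht : `|t - t'| <= `|A - A'|.
    rewrite -{1}(LS t z td zr') -(LS t' z' t'd z'r') -linearB; exact: lsub_norm.
  have hc := HC t z z' tr zr z'r.
  set B := y t (row_mx 0 z').
  have hB : `|B - A'| <= Ly * `|t - t'| by exact: Hlyt.
  have hK := Kt t tr.
  set w := rsubmx (A - B) in hc.
  have hw : `|w| <= `|A - A'| + Ly * `|t - t'|.
    apply: le_trans (@rsub_norm _ _ _ (A - B)) _.
    have -> : A - B = (A - A') - (B - A') by rewrite opprB addrA subrK.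
    apply: le_trans (ler_normB _ _) _; exact: lerD.
  have hd : `|z - z'| <= `|w| + `|w - (z - z')|.
    have e : w - (w - (z - z')) = z - z' by rewrite opprB addrC subrK.
    by rewrite -{1}e ler_normB.
  have n1 := normr_ge0 (z - z').
  have n2 := normr_ge0 (t - t').
  have n3 := normr_ge0 (A - A').
  have n4 := normr_ge0 t.
  have -> : `|(t, z) - (t', z')| = Num.max `|t - t'| `|z - z'| by [].
  rewrite ge_max; apply/andP; split; nra.
set eps := rho / (2 * (Ly + 1)).
have Ly1 : 0 < Ly + 1 by rewrite ltr_wpDl.
have eps0 : 0 < eps by rewrite divr_gt0 // mulr_gt0.
have epsE : eps * (2 * (Ly + 1)) = rho by rewrite /eps mulfVK // lt0r_neq0 // mulr_gt0.
have y00 : y 0 0 = 0 by rewrite Hy0 // normr0 ltW.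
have nbU1 : nbhs (0 : 'rV[R]_(k + m)) (Gmap y @` U0).
  apply/(@nbhs_normP R _ (0 : 'rV[R]_(k + m)) (Gmap y @` U0)); exists eps => //= q; rewrite /ball_ /= sub0r normrN => qe.
  set t := lsubmx q.
  have tq : `|t| <= `|q| by exact: lsub_norm.
  have n4 := normr_ge0 t.
  have tr : `|t| < rho by nra.
  have td : `|t| < delta := lt_trans tr rhod.
  pose Phi := fun z : 'rV[R]_m => z - (rsubmx (y t (row_mx 0 z)) - rsubmx q).
  have HPhiC : forall z z', `|z| <= rho -> `|z'| <= rho ->
      `|Phi z - Phi z'| <= 2^-1 * `|z - z'|.
    move=> z z' zr z'r.
    have -> : Phi z - Phi z' =
        - (rsubmx (y t (row_mx 0 z) - y t (row_mx 0 z')) - (z - z')).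
      by apply/rowP => i; rewrite !mxE; ring.
    rewrite normrN; apply: le_trans (HC t z z' tr zr z'r) _.
    have hK := Kt t tr.
    have n1 := normr_ge0 (z - z').
    rewrite ler_wpM2r //; nra.
  have HPhiB : forall z, `|z| <= rho -> `|Phi z| <= rho.
    move=> z zr.
    have h0 : `|Phi 0| <= (Ly + 1) * `|q|.
      rewrite /Phi row_mx0 sub0r normrN.
      apply: le_trans (ler_normB _ _) _.
      have h1 : `|rsubmx (y t 0)| <= Ly * `|q|.
        apply: le_trans (@rsub_norm _ _ _ _) _.
        rewrite -[y t 0]subr0 -{2}y00.
        have d0 : `|(0 : 'rV[R]_k)| < delta by rewrite normr0.
        have r0' : `|(0 : 'rV[R]_(k + m))| <= r by rewrite normr0 ltW.
        apply: le_trans (Hlyt t 0 0 td d0 r0') _.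
        by rewrite subr0 ler_wpM2l.
      have h2 : `|rsubmx q| <= `|q| by exact: rsub_norm.
      nra.
    have h1 := HPhiC z 0 zr ltac:(by rewrite normr0 ltW).
    rewrite subr0 in h1.
    have -> : Phi z = (Phi z - Phi 0) + Phi 0 by rewrite subrK.
    apply: le_trans (ler_normD _ _) _.
    have n1 := normr_ge0 z.
    have n5 := normr_ge0 q.
    nra.
  have [z [zr zf]] := @fixpt R m Phi rho rho0 HPhiB HPhiC.
  exists (t, z); first by split.
  rewrite /Gmap /=.
  have zr' : `|z| <= r := le_trans zr rhor.
  have E : rsubmx (y t (row_mx 0 z)) - rsubmx q = z - Phi z.
    by rewrite /Phi opprB addrCA subrr addr0.
  move: E; rewrite zf subrr => /eqP; rewrite subr_eq0 => /eqP E.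
  by rewrite -[RHS]hsubmxK -[LHS]hsubmxK LS // E.
have Ginj : forall p p', U0 p -> U0 p' -> Gmap y p = Gmap y p' -> p = p'.
  move=> p p' Up Up' E; have := Ginvb p p' Up Up'.
  rewrite E subrr normr0 mulr0 normr_le0 subr_eq0 => /eqP //.
pose Ginv := fun q => xget ((0 : 'rV[R]_k), (0 : 'rV[R]_m))
  [set p | U0 p /\ Gmap y p = q].
have GK : forall p, U0 p -> Ginv (Gmap y p) = p.
  move=> p Up; apply: xget_unique; first by split.
  by move=> p' [Up' E]; exact: Ginj.
have GK2 : forall q, (Gmap y @` U0) q -> U0 (Ginv q) /\ Gmap y (Ginv q) = q.
  by move=> q [p Up <-]; rewrite GK.
have Ginvl : forall q q', (Gmap y @` U0) q -> (Gmap y @` U0) q' ->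
    `|Ginv q - Ginv q'| <= 2 * (1 + Ly) * `|q - q'|.
  move=> q q' [p Up <-] [p' Up' <-]; rewrite !GK //; exact: Ginvb.
have c0 : 0 <= 2 * (1 + Ly) by rewrite mulr_ge0 // addr_ge0.
exists U0, (Gmap y @` U0); split => //.
- apply/(@nbhs_normP R _ ((0 : 'rV[R]_k), (0 : 'rV[R]_m)) U0).
  exists rho => //= p; rewrite /ball_ /= sub0r normrN.
  have -> : `|p| = Num.max `|p.1| `|p.2| by [].
  by rewrite gt_max => /andP[h1 h2]; split => //; exact: ltW.
- exists Ginv; split => //.
  + split; first exact: (@lip_within R _ _ U0 (Gmap y) Ly Ly0 Glip).
    exact: (@lip_within R _ _ (Gmap y @` U0) Ginv _ c0 Ginvl).
  + exact: (@lip_mk R _ _ U0 (Gmap y) Ly Glip).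
  + exact: (@lip_mk R _ _ (Gmap y @` U0) Ginv _ Ginvl).
Qed.
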